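(* Let $V$ be a topological real vector space and $N$ a Minkowski norm on $V$. The following are equivalent: (1) $N$ is strictly sub-convex. (2) $N$ is continuous, and for any two vectors $x\neq y$ in $V$ with $N(x)=N(y)=1$ one has $N\big((x+y)/2\big)<1$.
   Context: Topological real vector spaces are not assumed Hausdorff. A Minkowski norm on a real vector space $V$ is a function $N:V\to\mathbb{R}$ that is non-negative, satisfies $N(\lambda x)=\lambda N(x)$ for all $x\in V$ and real $\lambda>0$, satisfies $N(x+y)\le N(x)+N(y)$ for all $x,y$, and satisfies $N(x)\neq 0$ for $x\neq 0$. For $f:C\to\mathbb{R}$ and $r\in\mathbb{R}$, the sublevel set is $S_r(f)=\{x\in C: f(x)\le r\}$. For a subset $S$ of a topological real vector space, $\mathrm{Aff}(S)$ is its affine hull; the relative interior $\mathrm{ri}(S)$ and relative closure $\mathrm{rc}(S)$ are the interior and closure of $S$ in the subspace topology of $\mathrm{Aff}(S)$. For $x,y$, $]x,y[=\{(1-t)x+ty: t\in[0,1]\}\setminus\{x,y\}$. A subset $C$ is strictly convex if for any two distinct points $x,y\in\mathrm{rc}(C)$ one has $]x,y[\subseteq \mathrm{ri}(C)$. A function $f:C\to\mathbb{R}$ on a subset $C$ of a topological real vector space is strictly sub-convex if $S_r(f)$ is strictly convex for every $r\in\mathbb{R}$. *)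

(* Defs.v *)
From HB Require Import structures.
From mathcomp Require Import all_boot all_order all_algebra.
From mathcomp Require Import all_classical all_reals all_analysis.
Set Implicit Arguments. Unset Strict Implicit. Unset Printing Implicit Defensive.
Import Order.TTheory GRing.Theory Num.Theory.
Local Open Scope classical_set_scope.
Local Open Scope ring_scope.

Section Defs.
Variables (R : realType) (V : topologicalLmodType R).

Definition minkowski_norm (N : V -> R) : Prop :=
  [/\ (forall x, 0 <= N x),
      (forall (l : R) x, 0 < l -> N (l *: x) = l * N x),
      (forall x y, N (x + y) <= N x + N y) &
      (forall x, x != 0 -> N x != 0)].

Definition sublevel (f : V -> R) (r : R) : set V := [set x | f x <= r].

Definition aff_hull (S : set V) : set V :=
  [set x | exists (n : nat) (p : 'I_n -> V) (c : 'I_n -> R),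
      [/\ (forall i, S (p i)), \sum_(i < n) c i = 1 &
          x = \sum_(i < n) c i *: p i]].

Definition rel_interior (S : set V) : set V :=
  [set x | S x /\ exists U : set V, [/\ open U, U x & U `&` aff_hull S `<=` S]].

Definition rel_closure (S : set V) : set V :=
  [set x | aff_hull S x /\
     forall U : set V, open U -> U x -> U `&` S !=set0].

Definition open_segment (x y : V) : set V :=
  [set z | (exists t : R, [/\ 0 <= t, t <= 1 & z = (1 - t) *: x + t *: y])
           /\ z != x /\ z != y].

Definition strictly_convex (C : set V) : Prop :=
  forall x y, rel_closure C x -> rel_closure C y -> x != y ->
    open_segment x y `<=` rel_interior C.

Definition strictly_subconvex (f : V -> R) : Prop :=
  forall r : R, strictly_convex (sublevel f r).

End Defs.

(* Main.v *)
Require Import Defs.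
From HB Require Import structures.
From mathcomp Require Import all_boot all_order all_algebra.
From mathcomp Require Import all_classical all_reals all_analysis.
From mathcomp Require Import ring lra.
Import Order.TTheory GRing.Theory Num.Theory.
Import numFieldTopology.Exports.
Local Open Scope classical_set_scope.
Local Open Scope ring_scope.

Section Aux.
Variables (R : realType) (V : topologicalLmodType R) (N : V -> R).
Hypothesis hN : minkowski_norm N.

Lemma N0 : N 0 = 0.
Proof.
case: hN => _ hom _ _.
have := hom 2 0 (ltr0Sn _ 1); rewrite scaler0 => h.
have : N 0 * (2 - 1) = 0 by rewrite mulrBr mulr1 mulrC -h subrr.
by move/eqP; rewrite mulf_eq0 => /orP[/eqP//|]; rewrite (_ : 2 - 1 = 1 :> R) ?oner_eq0 //; lra.
Qed.

Lemma homog0 l x : 0 <= l -> N (l *: x) = l * N x.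
Proof.
case: hN => _ hom _ _; rewrite le_eqVlt => /orP[/eqP<-|]; last exact: hom.
by rewrite scale0r mul0r N0.
Qed.

Lemma Nge0 x : 0 <= N x. Proof. by case: hN. Qed.
Lemma Nadd x y : N (x + y) <= N x + N y. Proof. by case: hN. Qed.
Lemma Neq0 x : N x = 0 -> x = 0.
Proof.
case: hN => _ _ _ h e; apply/eqP; apply/negPn/negP => /h; by rewrite e eqxx.
Qed.

Lemma comb a b u v : 0 <= a -> 0 <= b -> N (a *: u + b *: v) <= a * N u + b * N v.
Proof.
move=> a0 b0; rewrite -(homog0 _ u a0) -(homog0 _ v b0); exact: Nadd.
Qed.

Lemma aff_self (S : set V) x : S x -> aff_hull S x.
Proof.
move=> Sx; exists 1%N, (fun _ => x), (fun _ => 1); split => //.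
  by rewrite big_ord1.
by rewrite big_ord1 scale1r.
Qed.

Lemma rc_self (S : set V) x : S x -> rel_closure S x.
Proof. by move=> Sx; split; [exact: aff_self| move=> U _ Ux; exists x]. Qed.

Lemma aff_all r y : 0 < r -> aff_hull (sublevel N r) y.
Proof.
move=> r0.
have d0 : 0 < N y + r by have := Nge0 y; lra.
pose p : 'I_2 -> V := fun i => if val i == 0%N then (r / (N y + r)) *: y else 0.
pose c : 'I_2 -> R := fun i => if val i == 0%N then (N y + r) / r else 1 - (N y + r) / r.
exists 2%N, p, c; split.
- move=> i; rewrite /p /sublevel /=; case: ifP => _.
    rewrite homog0; last by rewrite divr_ge0 // ltW.
    rewrite mulrAC ler_pdivrMr // ler_wpM2l ?ltW //.
    have := Nge0 y; lra.
  by rewrite N0 ltW.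
- by rewrite !big_ord_recr big_ord0 /= /c /= add0r addrC subrK.
- rewrite !big_ord_recr big_ord0 /= /c /p /= scaler0 addr0 add0r scalerA.
  by rewrite mulrA divfK ?gt_eqF // divff ?gt_eqF // scale1r.
Qed.

Lemma near_sub (x0 : V) (U : set V) : nbhs 0 U ->
  nbhs x0 [set x | U (x - x0)] /\ nbhs x0 [set x | U (x0 - x)].
Proof.
move=> U0; split.
  have hc : (fun x : V => x - x0) @ x0 --> (x0 - x0).
    apply: (@continuous_comp _ _ _ (fun x => (x, x0)) (fun x : V * V => x.1 - x.2)).
      by apply: (@cvg_pair _ _ _ (nbhs x0)); [exact: cvg_id | exact: cvg_cst].
    exact: sub_continuous.
  by rewrite subrr in hc; exact: hc.
have hc : (fun x : V => x0 - x) @ x0 --> (x0 - x0).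
  apply: (@continuous_comp _ _ _ (fun x => (x0, x)) (fun x : V * V => x.1 - x.2)).
    by apply: (@cvg_pair _ _ _ (nbhs x0)); [exact: cvg_cst | exact: cvg_id].
  exact: sub_continuous.
by rewrite subrr in hc; exact: hc.
Qed.

Lemma near_scale (z : V) (U : set V) : nbhs z U ->
  nbhs (1 : R^o) [set t : R | U (t *: z)].
Proof.
move=> Uz.
have hc : (fun t : R^o => t *: z) @ (1 : R^o) --> (1 : R^o) *: z.
  apply: (@continuous_comp R^o (R^o * V)%type V (fun t => (t, z))
     (fun x => x.1 *: x.2)); last exact: scale_continuous.
  by apply: (@cvg_pair _ _ _ (nbhs (1 : R^o)) (nbhs (1 : R^o)) (nbhs z)); [exact: cvg_id | exact: cvg_cst].
by rewrite scale1r in hc; exact: hc.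
Qed.

Lemma int0 : strictly_subconvex N -> forall r, 0 < r -> nbhs (0 : V) (sublevel N r).
Proof.
move=> hS r r0.
case: (pselect (exists v : V, v != 0)) => [[v v0]|nv]; last first.
  apply: (filterS _ filterT) => x _.
  have -> : x = 0 by apply/eqP; apply/negPn/negP => h; apply: nv; exists x.
  by rewrite /sublevel /= N0 ltW.
have nv0 : - v != 0 by rewrite oppr_eq0.
have Nv : 0 < N v by rewrite lt_neqAle Nge0 andbT eq_sym; apply/eqP => /Neq0 /eqP; apply/negP.
have Nnv : 0 < N (- v) by rewrite lt_neqAle Nge0 andbT eq_sym; apply/eqP => /Neq0 /eqP; apply/negP.
set a := r / N v; set b := r / N (- v).
have a0 : 0 < a by rewrite divr_gt0.
have b0 : 0 < b by rewrite divr_gt0.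
have ab0 : a + b != 0 by rewrite gt_eqF // addr_gt0.
set u := a *: v; set w := b *: (- v).
have Bu : sublevel N r u by rewrite /sublevel /= /u (homog0 _ _ (ltW a0)) /a divfK ?gt_eqF.
have Bw : sublevel N r w by rewrite /sublevel /= /w (homog0 _ _ (ltW b0)) /b divfK ?gt_eqF.
have uw : u != w.
  apply/eqP => h.
  have : (a + b) *: v = 0 by rewrite scalerDl -[b *: v]opprK -scalerN -/w -h subrr.
  by move/eqP; rewrite scaler_eq0 (negbTE ab0) (negbTE v0).
have seg : open_segment u w 0.
  rewrite /open_segment /=; split; last first.
    by split; rewrite eq_sym scaler_eq0 negb_or ?v0 ?nv0 gt_eqF.
  exists (a / (a + b)); split.
  - by rewrite divr_ge0 // ltW // addr_gt0.
  - by rewrite ler_pdivrMr ?addr_gt0 // mul1r lerDl ltW.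
  - rewrite /u /w !scalerA scalerN -scaleNr -scalerDl.
    suff -> : (1 - a / (a + b)) * a + - (a / (a + b) * b) = 0 by rewrite scale0r.
    by field.
have [_ [U [oU U0 sub]]] := hS r u w (rc_self _ _ Bu) (rc_self _ _ Bw) uw _ seg.
apply: (filterS _ (open_nbhs_nbhs (conj oU U0))) => x Ux.
by apply: sub; split => //; exact: aff_all.
Qed.

Lemma cont : strictly_subconvex N -> continuous N.
Proof.
move=> hS x0; apply/cvgrPdist_lt => e e0.
have e2 : 0 < e / 2 by rewrite divr_gt0.
have [h1 h2] := near_sub x0 _ (int0 hS _ e2).
apply: filterS2 h1 h2 => x /= h1 h2.
have := Nadd (x - x0) x0; rewrite subrK => t1.
have := Nadd (x0 - x) x; rewrite subrK => t2.
rewrite /sublevel /= in h1 h2.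
rewrite ltr_distlC; apply/andP; split; lra.
Qed.

Lemma main_aux : strictly_subconvex N <->
   (continuous N /\
    forall x y : V, x != y -> N x = 1 -> N y = 1 ->
      N (2^-1 *: (x + y)) < 1).
Proof.
split.
- move=> hS; split; first exact: cont.
  move=> x y xy Nx Ny.
  have Bx : sublevel N 1 x by rewrite /sublevel /= Nx.
  have By : sublevel N 1 y by rewrite /sublevel /= Ny.
  have h2 : x + y = 2 *: (2^-1 *: (x + y)) by rewrite scalerA mulfV ?pnatr_eq0 // scale1r.
  have xx : 2 *: x = x + x by rewrite -[2]/(1 + 1) scalerDl scale1r.
  have yy : 2 *: y = y + y by rewrite -[2]/(1 + 1) scalerDl scale1r.
  have seg : open_segment x y (2^-1 *: (x + y)).
    rewrite /open_segment /=; split.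
      exists 2^-1; split.
      + by rewrite invr_ge0 ler0n.
      + by rewrite invf_le1 ?ler1n // ltr0n.
      + by rewrite scalerDr (_ : 1 - 2^-1 = 2^-1 :> R) //; field.
    split; apply/eqP => h; rewrite h in h2; move/eqP: xy; apply.
      by apply: (@addrI _ x); rewrite h2 xx.
    by apply: (@addIr _ y); rewrite h2 yy.
  have [Bz [U [oU Uz sub]]] := hS 1 x y (rc_self _ _ Bx) (rc_self _ _ By) xy _ seg.
  set z := 2^-1 *: (x + y) in Bz Uz sub *.
  rewrite lt_neqAle Bz andbT; apply/eqP => Nz1.
  have := near_scale _ _ (open_nbhs_nbhs (conj oU Uz)).
  move/nbhs_ballP => [d /= d0 hd].
  have : ball (1 : R^o) d (1 + d / 2).
    rewrite /ball /= opprD addrA subrr add0r normrN ger0_norm ?divr_ge0 ?ltW //.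
    lra.
  move/hd => /= Ut.
  have : sublevel N 1 ((1 + d / 2) *: z) by apply: sub; split => //; exact: aff_all.
  rewrite /sublevel /= homog0 ?Nz1; last by rewrite addr_ge0 ?divr_ge0 ?ltW.
  lra.
- case=> hc hmid r x y rx ry xy z seg.
  have key : forall v, rel_closure (sublevel N r) v -> N v <= r.
    move=> v [_ hv]; rewrite leNgt; apply/negP => rv.
    have oG : open (N @^-1` [set w | r < w]) := open_comp (fun w _ => hc w) (@open_gt _ r).
    have [w [/= rw wr]] := hv _ oG rv.
    rewrite /sublevel /= in wr; lra.
  have Nx := key x rx; have Ny := key y ry.
  case: seg => [[t [t0 t1 ze]] [zx zy]].
  have tpos : 0 < t.
    rewrite lt_neqAle t0 andbT; apply/negP => /eqP t0e.
    by move: zx; rewrite ze -t0e subr0 scale1r scale0r addr0 eqxx.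
  have tlt1 : t < 1.
    rewrite lt_neqAle t1 andbT; apply/negP => /eqP t0e.
    by move: zy; rewrite ze t0e subrr scale0r add0r scale1r eqxx.
  have Nz : N z < r.
    have hcv : N z <= (1 - t) * N x + t * N y.
      by rewrite ze; apply: comb; lra.
    have NxG := Nge0 x; have NyG := Nge0 y.
    case: (ltP (N x) r) => hx; first nra.
    case: (ltP (N y) r) => hy; first nra.
    have ex : N x = r by apply/eqP; rewrite eq_le Nx hx.
    have ey : N y = r by apply/eqP; rewrite eq_le Ny hy.
    have r0 : 0 < r.
      rewrite lt_neqAle -ex Nge0 andbT eq_sym; apply/negP => /eqP /Neq0 x0.
      by move: xy; rewrite x0 eq_sym; apply/negP/negPn/eqP; apply: Neq0; rewrite ey -ex x0 N0.
    set m := 2^-1 *: (x + y).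
    have Nm : N m < r.
      have A : r^-1 *: x != r^-1 *: y.
        apply: contra xy => /eqP h; apply/eqP.
        by have := congr1 (fun v => r *: v) h; rewrite /= !scalerA mulfV ?gt_eqF // !scale1r.
      have B : N (r^-1 *: x) = 1 by rewrite (homog0 _ _ (ltW _)) ?invr_gt0 // ex mulVf ?gt_eqF.
      have C : N (r^-1 *: y) = 1 by rewrite (homog0 _ _ (ltW _)) ?invr_gt0 // ey mulVf ?gt_eqF.
      have := hmid _ _ A B C.
      rewrite -scalerDr scalerA mulrC -scalerA (homog0 _ _ (ltW _)) ?invr_gt0 //.
      by rewrite -/m mulrC ltr_pdivrMr // mul1r.
    have Nm0 := Nge0 m.
    case: (leP t 2^-1) => ht.
      have e : z = (1 - 2 * t) *: x + (2 * t) *: m.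
        rewrite ze /m scalerA (_ : 2 * t * 2^-1 = t); last by field.
        by rewrite scalerDr addrA -scalerDl; congr (_ *: _ + _); lra.
      have H : N z <= (1 - 2 * t) * N x + (2 * t) * N m by rewrite e; apply: comb; lra.
      rewrite ex in H; nra.
    have e : z = (2 - 2 * t) *: m + (2 * t - 1) *: y.
      rewrite ze /m scalerA (_ : (2 - 2 * t) * 2^-1 = 1 - t); last by field.
      by rewrite scalerDr -addrA -scalerDl; congr (_ + _ *: _); lra.
    have H : N z <= (2 - 2 * t) * N m + (2 * t - 1) * N y by rewrite e; apply: comb; lra.
    rewrite ey in H; nra.
  split; first by rewrite /sublevel /= ltW.
  exists (N @^-1` [set w | w < r]); split => //.
    exact: open_comp (fun w _ => hc w) (@open_lt _ r).
  by move=> w [/= /ltW].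
Qed.

End Aux.

Theorem mainTheorem1 (R : realType) (V : topologicalLmodType R) (N : V -> R) :
  minkowski_norm N ->
  (strictly_subconvex N <->
   (continuous N /\
    forall x y : V, x != y -> N x = 1 -> N y = 1 ->
      N (2^-1 *: (x + y)) < 1)).
Proof. exact: main_aux. Qed.
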